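(* Let $h:\mathbb{R}\to\mathbb{R}$ be a smooth function with $h(T)=\pi/2$ for $T\le 0$, $0<h(T)<\pi/2$ for $0<T<1$, and $h(T)=0$ for $T\ge 1$, and let $g(x)=\tan\bigl(h(x)\bigr)$ for $0<x<1$. Assume $g'''(x)<0$ for all $0<x<1$. Then $g''(x)>0$ and $g'(x)<0$ for $0<x<1$, and $$\lim_{x\to 1_-}\frac{g'(x)}{g(x)}=-\infty.$$ *)

(* Defs.v *)
From Stdlib Require Import Reals.
From Coquelicot Require Import Coquelicot.
Open Scope R_scope.

Definition smooth (f : R -> R) : Prop := forall (n : nat) (x : R), ex_derive_n f n x.

(* g = tan o h; only its values on (0,1) matter (derivatives there are local). *)
Definition gfun (h : R -> R) : R -> R := fun x => tan (h x).

(* Main.v *)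
From Stdlib Require Import Reals Lra.
From Coquelicot Require Import Coquelicot.
Require Import Defs.
Open Scope R_scope.

Lemma loc_gt (a x : R) : a < x -> locally x (fun t => a < t).
Proof. intro H. exact (open_gt a x H). Qed.

Lemma zero_right (f : R -> R) (l : R) :
  (forall y, 1 < y -> f y = 0) -> f 1 = 0 -> is_derive f 1 l -> l = 0.
Proof.
  intros Hz H1 Hd. apply is_derive_Reals in Hd.
  destruct (Req_dec l 0) as [E|E]; auto. exfalso.
  destruct (Hd (Rabs l) (Rabs_pos_lt _ E)) as [d Hdl].
  assert (Hp : 0 < d / 2) by (destruct d; simpl; lra).
  specialize (Hdl (d/2) ltac:(lra) ltac:(rewrite Rabs_pos_eq; destruct d; simpl in *; lra)).
  rewrite Hz in Hdl by lra. rewrite H1 in Hdl.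
  replace ((0 - 0) / (d/2) - l) with (- l) in Hdl by (field; lra).
  rewrite Rabs_Ropp in Hdl. lra.
Qed.

Lemma Derive_zero_right (f : R -> R) :
  (forall y, 1 < y -> f y = 0) -> forall y, 1 < y -> Derive f y = 0.
Proof.
  intros Hz y Hy. rewrite (Derive_ext_loc f (fun _ => 0)). apply Derive_const.
  apply (filter_imp (fun t => 1 < t)); [intros; auto | apply loc_gt; auto].
Qed.

Lemma cos_pos (h : R -> R)
  (hmid : forall T, 0 < T < 1 -> 0 < h T < PI / 2)
  (hpos : forall T, 1 <= T -> h T = 0) x : 0 < x -> 0 < cos (h x).
Proof.
  intro Hx. pose proof PI_RGT_0. apply cos_gt_0.
  - destruct (Rlt_le_dec x 1). specialize (hmid x ltac:(lra)); lra. rewrite hpos; lra.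
  - destruct (Rlt_le_dec x 1). specialize (hmid x ltac:(lra)); lra. rewrite hpos; lra.
Qed.

Lemma dG (h : R -> R) (hsmooth : smooth h)
  (hmid : forall T, 0 < T < 1 -> 0 < h T < PI / 2)
  (hpos : forall T, 1 <= T -> h T = 0) x : 0 < x ->
  is_derive (gfun h) x (Derive h x * (gfun h x ^ 2 + 1)).
Proof.
  intro Hx. unfold gfun.
  pose proof (is_derive_comp tan h x _ _ (is_derive_tan (h x) ltac:(pose proof (cos_pos h hmid hpos x Hx); lra)) (Derive_correct _ _ (hsmooth 1%nat x))).
  exact H.
Qed.

Lemma is_derive_eq_l (f : R -> R) x l l' : l = l' -> is_derive f x l -> is_derive f x l'.
Proof. intros ->; auto. Qed.

Lemma dG1 (h : R -> R) (hsmooth : smooth h)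
  (hmid : forall T, 0 < T < 1 -> 0 < h T < PI / 2)
  (hpos : forall T, 1 <= T -> h T = 0) x : 0 < x ->
  is_derive (fun x => Derive h x * (gfun h x ^ 2 + 1)) x
   (Derive (Derive h) x * (gfun h x ^ 2 + 1) + Derive h x * (2 * gfun h x * (Derive h x * (gfun h x ^ 2 + 1)))).
Proof.
  intro Hx.
  pose proof (dG h hsmooth hmid hpos x Hx) as HG.
  pose proof (Derive_correct (Derive h) x (hsmooth 2%nat x)) as H1.
  pose proof (is_derive_mult _ _ x _ _ H1 (is_derive_plus _ _ x _ _ (is_derive_pow _ 2 x _ HG) (is_derive_const 1 x)) Rmult_comm) as A.
  revert A. apply is_derive_eq_l. unfold plus, mult, zero; simpl. unfold plus, mult, zero; simpl. ring.
Qed.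

Lemma cont_of_ex (f : R -> R) x : ex_derive f x -> continuity_pt f x.
Proof. intro H. apply continuity_pt_filterlim. apply (ex_derive_continuous f x H). Qed.

Lemma mono_le (f df : R -> R) a b : a < b ->
  (forall x, a < x < b -> is_derive f x (df x)) ->
  (forall x, a <= x <= b -> ex_derive f x) ->
  (forall x, a < x < b -> df x <= 0) -> f b <= f a.
Proof.
  intros Hab Hd He Hs.
  destruct (MVT_gen f a b (fun t => Rmin (df t) 0)) as [c [Hc E]].
  - intros t Ht. rewrite Rmin_left, Rmax_right in Ht by lra.
    rewrite Rmin_left by (apply Hs; lra). apply Hd; lra.
  - intros t Ht. rewrite Rmin_left, Rmax_right in Ht by lra. apply cont_of_ex, He; lra.
  - assert (Rmin (df c) 0 <= 0) by apply Rmin_r. nra.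
Qed.

Lemma mono_lt (f df : R -> R) a b : a < b ->
  (forall x, a < x < b -> is_derive f x (df x)) ->
  (forall x, a <= x <= b -> ex_derive f x) ->
  (forall x, a < x < b -> df x < 0) -> f b < f a.
Proof.
  intros Hab Hd He Hs.
  set (p := a + (b-a)/3). set (q := a + 2*(b-a)/3).
  assert (f p <= f a). { apply (mono_le f df); unfold p in *; try lra; intros; [apply Hd|apply He|left;apply Hs]; lra. }
  assert (f b <= f q). { apply (mono_le f df); unfold q in *; try lra; intros; [apply Hd|apply He|left;apply Hs]; lra. }
  destruct (MVT_gen f p q df) as [c [Hc E]].
  - intros t Ht. rewrite Rmin_left, Rmax_right in Ht by (unfold p, q; lra). apply Hd; unfold p, q in *; lra.
  - intros t Ht. rewrite Rmin_left, Rmax_right in Ht by (unfold p, q; lra). apply cont_of_ex, He; unfold p, q in *; lra.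
  - rewrite Rmin_left, Rmax_right in Hc by (unfold p, q; lra).
    assert (df c < 0) by (apply Hs; unfold p, q in *; lra).
    assert (p < q) by (unfold p, q; lra). nra.
Qed.

Lemma ex_G2 (h : R -> R) (hsmooth : smooth h)
  (hmid : forall T, 0 < T < 1 -> 0 < h T < PI / 2)
  (hpos : forall T, 1 <= T -> h T = 0) x : 0 < x ->
  ex_derive (fun x => Derive (Derive h) x * (gfun h x ^ 2 + 1) + Derive h x * (2 * gfun h x * (Derive h x * (gfun h x ^ 2 + 1)))) x.
Proof.
  intro Hx.
  assert (E0 : ex_derive (gfun h) x) by (eexists; apply (dG h hsmooth hmid hpos x Hx)).
  assert (E1 : ex_derive (Derive h) x) by exact (hsmooth 2%nat x).
  assert (E2 : ex_derive (Derive (Derive h)) x) by exact (hsmooth 3%nat x).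
  assert (E3 : ex_derive (fun x => gfun h x ^ 2 + 1) x).
  { apply (ex_derive_plus (fun x => gfun h x ^ 2) (fun _ => 1)). apply ex_derive_pow; auto. apply ex_derive_const. }
  apply (ex_derive_plus (fun x => Derive (Derive h) x * (gfun h x ^ 2 + 1))).
  - apply (ex_derive_mult (Derive (Derive h))); auto.
  - apply (ex_derive_mult (Derive h)); auto.
    apply (ex_derive_mult (fun x => 2 * gfun h x)).
    + apply (ex_derive_mult (fun _ => 2)); auto. apply ex_derive_const.
    + apply (ex_derive_mult (Derive h)); auto.
Qed.

Theorem mainTheorem3 (h : R -> R)
  (hsmooth : smooth h)
  (hneg : forall T, T <= 0 -> h T = PI / 2)
  (hmid : forall T, 0 < T < 1 -> 0 < h T < PI / 2)
  (hpos : forall T, 1 <= T -> h T = 0)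
  (g3 : forall x, 0 < x < 1 -> Derive_n (gfun h) 3 x < 0) :
  (forall x, 0 < x < 1 -> Derive_n (gfun h) 2 x > 0 /\ Derive (gfun h) x < 0) /\
  filterlim (fun x => Derive (gfun h) x / gfun h x) (at_left 1) (Rbar_locally m_infty).
Proof.
  set (G := gfun h).
  set (G1 := fun x => Derive h x * (gfun h x ^ 2 + 1)).
  set (G2 := fun x => Derive (Derive h) x * (gfun h x ^ 2 + 1) + Derive h x * (2 * gfun h x * (Derive h x * (gfun h x ^ 2 + 1)))).
  assert (HG : forall x, 0 < x -> is_derive G x (G1 x)) by (intros; apply dG; auto).
  assert (HG1 : forall x, 0 < x -> is_derive G1 x (G2 x)) by (intros; apply dG1; auto).
  assert (EG2 : forall x, 0 < x -> ex_derive G2 x) by (intros; apply ex_G2; auto).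
  assert (L1 : forall x, 0 < x -> locally x (fun t => G1 t = Derive G t)).
  { intros x Hx. apply (filter_imp (fun t => 0 < t)); [|apply loc_gt; auto].
    intros t Ht. symmetry. apply is_derive_unique, HG; auto. }
  assert (L2 : forall x, 0 < x -> locally x (fun t => G2 t = Derive (Derive G) t)).
  { intros x Hx. apply (filter_imp (fun t => 0 < t)); [|apply loc_gt; auto].
    intros t Ht. symmetry. rewrite <- (Derive_ext_loc G1) by (apply L1; auto).
    apply is_derive_unique, HG1; auto. }
  assert (EG : forall x, 0 < x -> ex_derive G x) by (intros x Hx; eexists; apply HG; auto).
  assert (ED1 : forall x, 0 < x -> ex_derive (Derive G) x).
  { intros x Hx. apply (ex_derive_ext_loc G1); auto. eexists; apply HG1; auto. }
  assert (ED2 : forall x, 0 < x -> ex_derive (Derive (Derive G)) x).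
  { intros x Hx. apply (ex_derive_ext_loc G2); auto. }
  assert (Z0 : forall y, 1 <= y -> G y = 0).
  { intros y Hy. unfold G, gfun. rewrite hpos by auto. apply tan_0. }
  assert (Z1 : forall y, 1 < y -> Derive G y = 0).
  { apply Derive_zero_right. intros; apply Z0; lra. }
  assert (Z2 : forall y, 1 < y -> Derive (Derive G) y = 0).
  { apply Derive_zero_right. auto. }
  assert (Z1' : Derive G 1 = 0).
  { apply (zero_right G). intros; apply Z0; lra. apply Z0; lra. apply Derive_correct, EG; lra. }
  assert (Z2' : Derive (Derive G) 1 = 0).
  { apply (zero_right (Derive G)); auto. apply Derive_correct, ED1; lra. }
  assert (P2 : forall x, 0 < x < 1 -> Derive (Derive G) x > 0).
  { intros x Hx. rewrite <- Z2'. apply (mono_lt _ (Derive (Derive (Derive G)))); try lra.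
    - intros t Ht. apply Derive_correct, ED2; lra.
    - intros t Ht. apply ED2; lra.
    - intros t Ht. apply (g3 t); lra. }
  assert (P1 : forall x, 0 < x < 1 -> Derive G x < 0).
  { intros x Hx. rewrite <- Z1'.
    enough (- Derive G 1 < - Derive G x) by lra.
    apply (mono_lt (fun t => - Derive G t) (fun t => - Derive (Derive G) t)); try lra.
    - intros t Ht. apply (is_derive_opp (Derive G)). apply Derive_correct, ED1; lra.
    - intros t Ht. eexists; apply (is_derive_opp (Derive G)); apply Derive_correct, ED1; lra.
    - intros t Ht. pose proof (P2 t ltac:(lra)). lra. }
  split.
  { intros x Hx. split; [apply P2 | apply P1]; auto. }
  assert (B : forall x, 0 < x < 1 -> Derive G x / G x <= - / (1 - x)).
  { intros x Hx.
    assert (Gp : 0 < G x).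
    { unfold G, gfun. destruct (hmid x Hx). apply tan_gt_0; lra. }
    destruct (MVT_gen G x 1 (Derive G)) as [c [Hc E]].
    - intros t Ht. rewrite Rmin_left, Rmax_right in Ht by lra. apply Derive_correct, EG; lra.
    - intros t Ht. rewrite Rmin_left, Rmax_right in Ht by lra. apply cont_of_ex, EG; lra.
    - rewrite Rmin_left, Rmax_right in Hc by lra.
      assert (Hm : Derive G x <= Derive G c).
      { destruct (Req_dec c x) as [->|Hcx]; [lra|].
        destruct (Req_dec c 1) as [->|Hc1]. rewrite Z1'. left; apply P1; lra.
        left. enough (- Derive G c < - Derive G x) by lra.
        apply (mono_lt (fun t => - Derive G t) (fun t => - Derive (Derive G) t)); try lra.
        + intros t Ht. apply (is_derive_opp (Derive G)). apply Derive_correct, ED1; lra.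
        + intros t Ht. eexists; apply (is_derive_opp (Derive G)); apply Derive_correct, ED1; lra.
        + intros t Ht. pose proof (P2 t ltac:(lra)). lra. }
      rewrite Z0 in E by lra.
      assert (G x <= - Derive G x * (1 - x)) by nra.
      apply (Rmult_le_reg_r (G x * (1 - x))). nra.
      replace (Derive G x / G x * (G x * (1 - x))) with (Derive G x * (1 - x)) by (field; lra).
      replace (- / (1 - x) * (G x * (1 - x))) with (- G x) by (field; lra). lra. }
  intros P [M HM].
  exists (mkposreal (Rmin 1 (/ (Rabs M + 1))) ltac:(apply Rmin_pos; [lra| apply Rinv_0_lt_compat; pose proof (Rabs_pos M); lra])).
  intros y Hy Hy1. apply HM.
  unfold ball in Hy; simpl in Hy. unfold AbsRing_ball, abs, minus, plus, opp in Hy; simpl in Hy.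
  rewrite Rabs_left in Hy by lra.
  assert (Hy0 : 0 < y) by (pose proof (Rmin_l 1 (/ (Rabs M + 1))); lra).
  pose proof (B y ltac:(lra)).
  assert (1 - y < / (Rabs M + 1)) by (pose proof (Rmin_r 1 (/ (Rabs M + 1))); lra).
  assert (Rabs M + 1 < / (1 - y)).
  { rewrite <- (Rinv_inv (Rabs M + 1)). apply Rinv_lt_contravar; [|lra].
    apply Rmult_lt_0_compat; [lra|]. apply Rinv_0_lt_compat. pose proof (Rabs_pos M); lra. }
  pose proof (Rle_abs (-M)). rewrite Rabs_Ropp in *. fold G. lra.
Qed.
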